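(* Let $n\ge2$ and let $a_1,\dots,a_{n-1}\in\mathbb C$ be fixed. For $a\in\mathbb C$ set $h_a(z)=z^n+a_{n-1}z^{n-1}+a^n$ and $f_a(z)=z^n+a_{n-1}z^{n-1}+\cdots+a_1z+a^n$. Then $$\lim_{|a|\to+\infty}d_F\bigl(Z(h_a),Z(f_a)\bigr)=0.$$
   Context: $Z(f)$ denotes the roots of $f$ counted with multiplicity. For multisets $A=\{u_1,\dots,u_m\}$, $B=\{v_1,\dots,v_m\}$ in $\mathbb C$, $d_F(A,B)=\min_{\sigma}\max_k|u_k-v_{\sigma(k)}|$ over permutations $\sigma$ of $\{1,\dots,m\}$. *)

(* Defs.v *)
(* The complex numbers C are modelled by an arbitrary
   numClosedFieldType (algebraically closed field with a norm). *)
From HB Require Import structures.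
From mathcomp Require Import all_boot all_order all_algebra all_fingroup.
Set Implicit Arguments. Unset Strict Implicit. Unset Printing Implicit Defensive.
Import Order.TTheory GRing.Theory Num.Theory.
Local Open Scope ring_scope.

(* s is the multiset of roots Z(p), counted with multiplicity, of the monic p *)
Definition is_roots (C : numClosedFieldType) (p : {poly C}) (s : seq C) : Prop :=
  p = \prod_(x <- s) ('X - x%:P).

Definition dF_perm (C : numClosedFieldType) (u v : seq C) (sigma : 'S_(size u)) : C :=
  \big[Num.max/0]_(k < size u) `|u`_k - v`_(sigma k)|.

(* Matching distance d_F(A,B) = min_sigma max_k |u_k - v_{sigma(k)}|
   (minimum over all permutations; seeded with the identity permutation,
   which is itself among the sigma's, so this is exactly the minimum). *)
Definition dF (C : numClosedFieldType) (u v : seq C) : C :=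
  \big[Num.min/@dF_perm C u v 1%g]_(sigma : 'S_(size u)) @dF_perm C u v sigma.

Definition f_poly (C : numClosedFieldType) (n : nat) (c : nat -> C) (a : C) : {poly C} :=
  'X^n + (\sum_(1 <= i < n) (c i *: 'X^i)) + (a ^+ n)%:P.

Definition h_poly (C : numClosedFieldType) (n : nat) (c : nat -> C) (a : C) : {poly C} :=
  'X^n + c n.-1 *: 'X^(n.-1) + (a ^+ n)%:P.

(* Main.v *)
Require Import Defs.
From HB Require Import structures.
From mathcomp Require Import all_boot all_order all_algebra all_fingroup.
From mathcomp Require Import separable.
Import Order.TTheory GRing.Theory Num.Theory.
Local Open Scope ring_scope.
Set Implicit Arguments. Unset Strict Implicit.

Section M.
Variable C : numClosedFieldType.

Lemma nlt_ge (x y : C) : x \is Num.real -> y \is Num.real -> ~~ (x < y) -> y <= x.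
Proof. by move=> xr yr; rewrite real_ltNge // negbK. Qed.

Lemma lt_nle (x y : C) : x < y -> y <= x -> False.
Proof. by move=> H1 H2; have := lt_le_trans H1 H2; rewrite ltxx. Qed.

Lemma prod_lb (n : nat) (F : 'I_n -> C) (i0 : 'I_n) (b : C) :
  0 <= b -> (forall i, 0 <= F i) -> (forall i, i != i0 -> b <= F i) ->
  F i0 * b ^+ n.-1 <= \prod_(i < n) F i.
Proof.
move=> b0 F0 Fb; rewrite (bigD1 i0) //=.
apply: ler_pM => //; first by rewrite exprn_ge0.
rewrite -[n in b ^+ n.-1]card_ord -(cardC1 i0) -prodr_const.
apply: ler_prod => i Hi; rewrite b0 /=; exact: Fb.
Qed.

Lemma prod_lb_const (n : nat) (F : 'I_n -> C) (b : C) :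
  0 <= b -> (forall i, b <= F i) -> b ^+ n <= \prod_(i < n) F i.
Proof.
move=> b0 Fb; rewrite -[n in b ^+ n]card_ord -prodr_const.
apply: ler_prod => i _; rewrite b0; exact: Fb.
Qed.

Lemma matching (n : nat) (R S : 'I_n -> C) (eps L : C) :
  0 < eps -> eps *+ 2 <= L ->
  (forall i j, i != j -> L <= `|R i - R j|) ->
  (forall j, \prod_(i < n) `|S j - R i| < eps * (L / 2%:R) ^+ n.-1) ->
  (forall i, \prod_(j < n) `|R i - S j| < (L / 2%:R) ^+ n) ->
  exists sigma : 'S_n, forall k, `|R k - S (sigma k)| < eps.
Proof.
move=> eps0 epsL sep HA HB.
have L0 : 0 <= L by apply: le_trans epsL; rewrite mulrn_wge0 // ltW.
have L20 : 0 <= L / 2%:R by rewrite divr_ge0.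
have epsL2 : eps <= L / 2%:R by rewrite ler_pdivlMr // mulr_natr.
have epsr : eps \is Num.real by rewrite gtr0_real.
have L2r : L / 2%:R \is Num.real by rewrite ger0_real.
have LL : L / 2%:R + L / 2%:R = L.
  by rewrite -splitr.
have step1 : forall j, exists i, `|S j - R i| < eps.
  move=> j; case: (boolP [exists i, `|S j - R i| < eps]) => [/existsP//|].
  rewrite negb_exists => /forallP Hn; exfalso.
  have [i0 Hge] : exists i0, forall i, i != i0 -> L / 2%:R <= `|S j - R i|.
    case: (pickP (fun i => `|S j - R i| < L / 2%:R)) => [i1 /= Hi1|/= Hn2].
      exists i1 => i ii1; apply: nlt_ge => //; first exact: normr_real.
      apply/negP => Hi.
      have := sep _ _ ii1; apply/negP; rewrite -real_ltNge ?normr_real ?ger0_real //.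
      apply: le_lt_trans (ler_distD (S j) _ _) _.
      by rewrite -LL distrC ltrD.
    by exists j => i _; apply: nlt_ge => //; [exact: normr_real | rewrite Hn2].
  apply: (lt_nle (HA j)).
  have H := prod_lb (F := fun i : 'I_n => `|S j - R i|) L20 (fun i => normr_ge0 _) Hge.
  apply: le_trans H.
  apply: ler_wpM2r; first by rewrite exprn_ge0.
  by apply: nlt_ge; [exact: normr_real|exact: epsr|exact: Hn].
pose g j := xchoose (step1 j).
have gP : forall j, `|S j - R (g j)| < eps by move=> j; exact: (xchooseP (step1 j)).
have surj : forall i, exists j, g j == i.
  move=> i.
  have [j Hj] : exists j, `|R i - S j| < eps.
    case: (boolP [exists j, `|R i - S j| < eps]) => [/existsP//|].
    rewrite negb_exists => /forallP Hn; exfalso.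
    apply: (lt_nle (HB i)); apply: prod_lb_const => // j.
    have Hj : eps <= `|R i - S j|.
      by apply: nlt_ge; [exact: normr_real|exact: epsr|exact: Hn].
    have gji : g j != i.
      apply/eqP => E; apply: (lt_nle (gP j)); by rewrite E distrC.
    have : L <= `|R i - S j| + L / 2%:R.
      have sij : i != g j by rewrite eq_sym.
      apply: le_trans (sep _ _ sij) _.
      apply: le_trans (ler_distD (S j) _ _) _.
      by rewrite lerD2l; apply: le_trans epsL2; apply: ltW.
    by rewrite -{1}LL lerD2r.
  exists j; case: (eqVneq (g j) i) => // E; exfalso.
  have sij : i != g j by rewrite eq_sym.
  apply: (lt_nle _ (sep _ _ sij)).
  apply: le_lt_trans (ler_distD (S j) _ _) _.
  apply: lt_le_trans epsL; rewrite mulr2n; exact: ltrD.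
pose sg i := xchoose (surj i).
have sgK : forall i, g (sg i) = i by move=> i; apply/eqP; exact: (xchooseP (surj i)).
have sg_inj : injective sg.
  by move=> i1 i2 E; rewrite -(sgK i1) -(sgK i2) E.
exists (perm sg_inj) => k; rewrite permE.
by rewrite distrC; have := gP (sg k); rewrite sgK.
Qed.

Lemma min_real (x y : C) : x \is Num.real -> y \is Num.real -> Num.min x y \is Num.real.
Proof. by rewrite /Order.min; case: ifP. Qed.

Lemma bigmin_le (I : eqType) (r : seq I) (idx : C) (F : I -> C) j :
  idx \is Num.real -> (forall i, F i \is Num.real) -> j \in r ->
  \big[Num.min/idx]_(i <- r) F i <= F j.
Proof.
move=> idxr Fr; elim: r => [//|x r IH]; rewrite inE big_cons => /orP [/eqP ->|jr].
  have br : \big[Num.min/idx]_(i <- r) F i \is Num.real.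
    by apply: (big_ind (fun x => x \is Num.real)) => //; exact: min_real.
  rewrite /Order.min; case: ifP => // /negbT; rewrite real_ltNge ?Fr //.
  by rewrite negbK.
apply: le_trans (IH jr); rewrite /Order.min; case: ifP => // /ltW //.
Qed.

Lemma dF_le (u v : seq C) (sigma : 'S_(size u)) : dF u v <= @dF_perm C u v sigma.
Proof.
have Pr : forall s, @dF_perm C u v s \is Num.real.
  move=> s; rewrite /dF_perm; apply: (big_ind (fun x : C => x \is Num.real)) => //; last by move=> *; apply: normr_real.
  by move=> x y xr yr; rewrite /Order.max; case: ifP.
rewrite /dF; apply: bigmin_le => //; exact: mem_index_enum.
Qed.

Lemma dF_perm_lt (u v : seq C) (sigma : 'S_(size u)) eps :
  0 < eps -> (forall k : 'I_(size u), `|u`_k - v`_(sigma k)| < eps) ->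
  @dF_perm C u v sigma < eps.
Proof.
move=> e0 H; rewrite /dF_perm; apply: (big_ind (fun x : C => x < eps)) => //.
by move=> x y xe ye; rewrite /Order.max; case: ifP.
Qed.

Lemma is_roots_eval (p : {poly C}) s z : is_roots p s ->
  `|p.[z]| = \prod_(i < size s) `|z - s`_i|.
Proof.
move=> ->; rewrite horner_prod normr_prod (big_nth 0) big_mkord.
by apply: eq_bigr => i _; rewrite hornerXsubC.
Qed.

Lemma is_roots_size (p : {poly C}) s : is_roots p s -> size s = (size p).-1.
Proof. by move=> ->; rewrite size_prod_XsubC. Qed.

Lemma is_roots_root (p : {poly C}) s i : is_roots p s -> (i < size s)%N -> p.[s`_i] = 0.
Proof.
move=> Hp Hi; apply/eqP; rewrite -normr_eq0 (is_roots_eval _ Hp).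
apply/prodf_eq0; exists (Ordinal Hi) => //=; by rewrite subrr normr0.
Qed.

Lemma size_h (n : nat) (c : nat -> C) a : (2 <= n)%N -> size (h_poly n c a) = n.+1.
Proof.
move=> n2; rewrite /h_poly -addrA size_polyDl size_polyXn // ltnS.
apply: leq_trans (size_polyD _ _) _; rewrite geq_max; apply/andP; split.
  by apply: leq_trans (size_scale_leq _ _) _; rewrite size_polyXn prednK // (leq_trans _ n2).
by apply: leq_trans (size_polyC_leq1 _) _; rewrite (leq_trans _ n2).
Qed.

Lemma size_f (n : nat) (c : nat -> C) a : (2 <= n)%N -> size (f_poly n c a) = n.+1.
Proof.
move=> n2; rewrite /f_poly -addrA size_polyDl size_polyXn // ltnS.
apply: leq_trans (size_polyD _ _) _; rewrite geq_max; apply/andP; split.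
  rewrite big_nat_cond; apply: (big_ind (fun p : {poly C} => size p <= n)%N); first by rewrite size_poly0.
    by move=> p q Hp Hq; apply: leq_trans (size_polyD _ _) _; rewrite geq_max Hp Hq.
  move=> i /andP [/andP [_ Hi] _].
  by apply: leq_trans (size_scale_leq _ _) _; rewrite size_polyXn.
by apply: leq_trans (size_polyC_leq1 _) _; rewrite (leq_trans _ n2).
Qed.

Lemma h_eval (n : nat) (c : nat -> C) a z :
  (h_poly n c a).[z] = z ^+ n + c n.-1 * z ^+ n.-1 + a ^+ n.
Proof. by rewrite /h_poly !hornerE. Qed.

Lemma f_eval (n : nat) (c : nat -> C) a z : (2 <= n)%N ->
  (f_poly n c a).[z] = (h_poly n c a).[z] + \sum_(1 <= i < n.-1) c i * z ^+ i.
Proof.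
move=> n2; rewrite h_eval /f_poly !hornerE horner_sum.
have n1 : (1 <= n.-1)%N by rewrite -ltnS prednK // (leq_trans _ n2).
have n0 : (0 < n)%N by rewrite (leq_trans _ n2).
rewrite -[in \sum_(1 <= i < n) _](prednK n0) big_nat_recr //=.
under eq_bigr do rewrite hornerZ hornerXn.
rewrite hornerZ hornerXn.
by rewrite -!addrA; congr (_ + _); rewrite addrC -!addrA; congr (_ + _); rewrite addrC.
Qed.

Lemma sepXn1 (n : nat) : (0 < n)%N -> separable_poly ('X^n + 1%:P : {poly C}).
Proof.
move=> n0; rewrite unlock; apply/Bezout_coprimepP.
exists (1, - (n%:R^-1) *: 'X) => /=.
rewrite derivD derivXn derivC addr0 mul1r -scalerAl mulrnAr -exprS prednK //.
rewrite -scaler_nat scalerA mulNr mulVf ?pnatr_eq0 -?lt0n // scaleN1r.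
by rewrite addrC addKr eqpxx.
Qed.

Lemma unit_roots (n : nat) : (0 < n)%N -> exists rho : seq C,
  [/\ size rho = n, uniq rho,
     forall z, z ^+ n + 1 = \prod_(i < n) (z - rho`_i) &
     forall i, (i < n)%N -> `|rho`_i| = 1].
Proof.
move=> n0; case: (closed_field_poly_normal ('X^n + 1%:P : {poly C})) => rho Hr.
rewrite (monicP (monicXnaddC 1 n0)) scale1r in Hr.
have sz : size rho = n.
  by have := congr1 (fun p : {poly C} => size p) Hr; rewrite size_XnaddC // size_prod_XsubC => -[].
have ev : forall z, z ^+ n + 1 = \prod_(i < n) (z - rho`_i).
  move=> z; have := congr1 (fun p => p.[z]) Hr; rewrite /= !hornerE => ->.
  rewrite horner_prod (big_nth 0) big_mkord sz.
  by apply: eq_bigr => i _; rewrite hornerXsubC.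
exists rho; split => //.
  by rewrite -separable_prod_XsubC -Hr sepXn1.
move=> i Hi.
have : rho`_i ^+ n + 1 = 0.
  rewrite ev; apply/eqP/prodf_eq0; exists (Ordinal Hi) => //=; by rewrite subrr.
move/eqP; rewrite addr_eq0 => /eqP /(congr1 (fun x => `|x|)).
rewrite normrX normrN normr1 => /eqP; rewrite pexpr_eq1 //; first by move/eqP.
Qed.

Lemma sep_const (n : nat) (rho : seq C) : uniq rho -> size rho = n ->
  exists d0 : C, 0 < d0 /\ forall i j : 'I_n, i != j -> d0 <= `|rho`_i - rho`_j|.
Proof.
move=> urho sz.
pose T := \sum_(i < n) \sum_(j < n | i != j) `|rho`_i - rho`_j|^-1.
have T0 : 0 <= T by apply: sumr_ge0 => i _; apply: sumr_ge0 => j _; rewrite invr_ge0.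
exists (1 + T)^-1; split; first by rewrite invr_gt0 ltr_pwDl.
move=> i j ij.
have dpos : 0 < `|rho`_i - rho`_j|.
  rewrite normr_gt0 subr_eq0; apply/negP => /eqP E.
  move: ij; rewrite -(inj_eq val_inj) /=.
  by rewrite -(nth_uniq 0 _ _ urho) ?sz ?ltn_ord // E eqxx.
have le1 : `|rho`_i - rho`_j|^-1 <= T.
  rewrite /T (bigD1 i) //= (bigD1 j) //= -addrA lerDl addr_ge0 //.
    by apply: sumr_ge0 => k _; rewrite invr_ge0.
  by apply: sumr_ge0 => k _; apply: sumr_ge0 => l _; rewrite invr_ge0.
rewrite -[X in _ <= X]invrK ler_pV2 ?inE ?unitfE ?invr_gt0 ?ltr_pwDl ?gt_eqF ?invr_gt0 ?ltr_pwDl //.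
  by apply: le_trans le1 _; rewrite lerDr.
Qed.

Lemma root_bound (n : nat) (a w q K : C) : (2 <= n)%N -> 1 <= `|a| -> K <= `|a| ->
  w ^+ n + q + a ^+ n = 0 -> (1 <= `|w| -> `|q| <= K * `|w| ^+ n.-1) ->
  `|w| < 2%:R * `|a|.
Proof.
move=> n2 a1 Ka E Hq.
rewrite real_ltNge ?realM ?normr_real ?ger0_real //; apply/negP => Hx.
set x := `|w| in Hx Hq; set A := `|a| in a1 Ka Hx.
have A0 : 0 < A by apply: lt_le_trans a1; rewrite ltr01.
have x1 : 1 <= x.
  apply: le_trans a1 (le_trans _ Hx); rewrite ler_peMl ?ltW // ltr1n //.
have x0 : 0 <= x by apply: le_trans x1; rewrite ler01.
have n0 : (0 < n)%N by rewrite (leq_trans _ n2).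
have Hup : x ^+ n <= K * x ^+ n.-1 + A ^+ n.
  have : w ^+ n = - (q + a ^+ n) by rewrite -addrA in E; apply/eqP; rewrite -addr_eq0 E.
  move/(congr1 (fun y => `|y|)); rewrite normrX normrN => ->.
  apply: le_trans (ler_normD _ _) _; rewrite normrX lerD2r; exact: Hq.
have xA : A < x by apply: lt_le_trans Hx; rewrite ltr_pMl // ltr1n.
have Xlt : A ^+ n.-1 < x ^+ n.-1 by rewrite ltrXn2r ?ltW // -lt0n -ltnS prednK.
have Hlow : K * x ^+ n.-1 + A ^+ n < x ^+ n.
  rewrite -(prednK n0) !exprS prednK //.
  have -> : x * x ^+ n.-1 = A * x ^+ n.-1 + (x - A) * x ^+ n.-1.
    by rewrite -mulrDl addrC subrK.
  rewrite addrC; apply: ltr_leD.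
    by rewrite ltr_pM2l.
  apply: ler_wpM2r; first by rewrite exprn_ge0.
  apply: le_trans Ka _; rewrite lerBrDl; apply: le_trans Hx; by rewrite mulr2n mulrDl mul1r.
by have := lt_le_trans Hlow Hup; rewrite ltxx.
Qed.

Lemma Pbound (c : nat -> C) (m : nat) (z B : C) : `|z| <= B -> 1 <= B ->
  `|\sum_(1 <= i < m) c i * z ^+ i| <= (\sum_(1 <= i < m) `|c i|) * B ^+ m.-1.
Proof.
move=> zB B1; apply: le_trans (ler_norm_sum _ _ _) _; rewrite mulr_suml.
rewrite big_nat_cond [X in _ <= X]big_nat_cond; apply: ler_sum => i /andP [/andP [i1 im] _].
rewrite normrM normrX; apply: ler_wpM2l => //.
apply: le_trans (_ : B ^+ i <= _).
  by apply: lerXn2r; rewrite ?nnegrE //; apply: le_trans zB.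
by apply: ler_weXn2l => //; rewrite -ltnS prednK // (leq_trans _ im).
Qed.

Lemma subsum (c : nat -> C) (m n : nat) : (m <= n)%N ->
  \sum_(1 <= i < m) `|c i| <= \sum_(0 <= i < n) `|c i|.
Proof.
move=> mn; case: m mn => [|m] mn.
  by rewrite big_geq // sumr_ge0.
rewrite (big_cat_nat (n:=1) (m:=0) (p:=n)) ?(leq_trans _ mn) //= (big_cat_nat (n:=m.+1) (m:=1) (p:=n)) //=.
rewrite addrC -addrA lerDl addr_ge0 // sumr_ge0 //.
Qed.

Lemma scaled_roots (n : nat) (rho : seq C) (a z : C) : a != 0 ->
  (forall z, z ^+ n + 1 = \prod_(i < n) (z - rho`_i)) ->
  z ^+ n + a ^+ n = \prod_(i < n) (z - a * rho`_i).
Proof.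
move=> a0 ev.
have -> : z ^+ n + a ^+ n = a ^+ n * ((z / a) ^+ n + 1).
  by rewrite mulrDr mulr1 exprMn exprVn mulrCA divff ?mulr1 ?expf_neq0.
rewrite ev -[in a ^+ n](card_ord n) -prodr_const -big_split /=.
by apply: eq_bigr => i _; rewrite mulrBr mulrCA divff ?mulr1.
Qed.
End M.

Section H.
Variable C : numClosedFieldType.

Lemma matching2 (n : nat) (R S : 'I_n -> C) (eps H : C) :
  0 < eps -> eps <= H ->
  (forall i j, i != j -> H *+ 2 <= `|R i - R j|) ->
  (forall j, \prod_(i < n) `|S j - R i| < eps * H ^+ n.-1) ->
  (forall i, \prod_(j < n) `|R i - S j| < H ^+ n) ->
  exists sigma : 'S_n, forall k, `|R k - S (sigma k)| < eps.
Proof.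
move=> e0 eH sep HA HB.
have E : H *+ 2 / 2%:R = H.
  by rewrite -[H *+ 2]mulr_natr mulfK ?pnatr_eq0.
apply: (matching (L := H *+ 2)) => //; rewrite ?E //.
by rewrite lerMn2r eH orbT.
Qed.

Lemma key (K Q A : C) (k : nat) : 0 <= K -> 0 < Q -> 0 < A ->
  K * 2%:R ^+ k / Q < A -> K * (2%:R * A) ^+ k < Q * A ^+ k.+1.
Proof.
move=> K0 Q0 A0; rewrite ltr_pdivrMr // => H.
rewrite exprMn mulrA exprS mulrA (mulrC Q).
by rewrite ltr_pM2r // exprn_gt0.
Qed.

Lemma f_eval2 (n : nat) (c : nat -> C) a z :
  (f_poly n c a).[z] = z ^+ n + \sum_(1 <= i < n) c i * z ^+ i + a ^+ n.
Proof.
rewrite /f_poly !hornerE horner_sum.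
by under eq_bigr do rewrite hornerZ hornerXn.
Qed.

Lemma Kc (n : nat) (c : nat -> C) : (0 < n)%N ->
  `|c n.-1| <= \sum_(0 <= i < n) `|c i|.
Proof.
move=> n0; rewrite -[in X in _ <= X](prednK n0) big_nat_recr //=.
by rewrite lerDr sumr_ge0.
Qed.

Lemma sum5 (x1 x2 x3 x4 x5 : C) : 0 <= x1 -> 0 <= x2 -> 0 <= x3 -> 0 <= x4 -> 0 <= x5 ->
  [/\ x1 <= x1 + x2 + x3 + x4 + x5, x2 <= x1 + x2 + x3 + x4 + x5,
      x3 <= x1 + x2 + x3 + x4 + x5, x4 <= x1 + x2 + x3 + x4 + x5 &
      x5 <= x1 + x2 + x3 + x4 + x5].
Proof.
move=> h1 h2 h3 h4 h5; split.
- by do 4! apply: ler_wpDr => //.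
- by do 3! apply: ler_wpDr => //; rewrite lerDr.
- by do 2! apply: ler_wpDr => //; rewrite lerDr addr_ge0.
- by apply: ler_wpDr => //; rewrite lerDr !addr_ge0.
- by rewrite lerDr !addr_ge0.
Qed.
End H.

Theorem corollary4p7 (C : numClosedFieldType) (n : nat) (c : nat -> C) :
  (2 <= n)%N ->
  forall eps : C, 0 < eps ->
  exists M : C, 0 <= M /\
    forall a : C, M < `|a| ->
    forall zh zf : seq C,
      is_roots (h_poly n c a) zh -> is_roots (f_poly n c a) zf ->
      dF zh zf < eps.
Proof.
move=> n2 eps e0.
have n0 : (0 < n)%N by rewrite (leq_trans _ n2).
have n1 : (n.-2).+1 = n.-1 by case: (n) n2 => [|[|m]].
have [rho [szr urho evr nr]] := unit_roots C n0.
have [d0 [d00 sepr]] := sep_const urho szr.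
have rhoN : forall i : 'I_n, rho`_i ^+ n = -1.
  move=> i; apply/eqP; rewrite -addr_eq0 evr; apply/prodf_eq0.
  by exists i => //; rewrite subrr.
pose dl := d0 / 4%:R.
have dl0 : 0 < dl by rewrite divr_gt0.
have dl4 : dl *+ 4 = d0 by rewrite -mulr_natr divfK ?pnatr_eq0.
pose K := \sum_(0 <= i < n) `|c i|.
have K0 : 0 <= K by rewrite sumr_ge0.
pose Q1 := dl * (dl *+ 2) ^+ n.-1.
have Q10 : 0 < Q1 by rewrite mulr_gt0 // exprn_gt0 // pmulrn_rgt0.
pose Q2 := eps * dl ^+ n.-1.
have Q20 : 0 < Q2 by rewrite mulr_gt0 // exprn_gt0.
pose M1 := K * 2%:R ^+ n.-1 / Q1.
pose M2 := eps / dl.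
pose M3 := K * 2%:R ^+ n.-2 / Q2.
have M10 : 0 <= M1 by apply: divr_ge0; [rewrite mulr_ge0 // exprn_ge0 | exact: ltW].
have M20 : 0 <= M2 by apply: divr_ge0; exact: ltW.
have M30 : 0 <= M3 by apply: divr_ge0; [rewrite mulr_ge0 // exprn_ge0 | exact: ltW].
have [s1 s2 s3 s4 s5] := sum5 M10 M20 M30 K0 ler01.
exists (M1 + M2 + M3 + K + 1); split.
  by apply: le_trans s5; rewrite ler01.
move=> a HM zh zf Hh Hf.
have hM1 : M1 < `|a| by apply: le_lt_trans HM.
have hM2 : M2 < `|a| by apply: le_lt_trans HM.
have hM3 : M3 < `|a| by apply: le_lt_trans HM.
have hK : K < `|a| by apply: le_lt_trans HM.
have a1 : 1 < `|a| by apply: le_lt_trans HM.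
have A0 : 0 < `|a| by apply: lt_trans a1; rewrite ltr01.
have a0 : a != 0 by rewrite -normr_gt0.
have szh : size zh = n by rewrite (is_roots_size Hh) size_h.
have szf : size zf = n by rewrite (is_roots_size Hf) size_f.
have KcK : `|c n.-1| <= K := Kc c n0.
have twoA1 : 1 <= 2%:R * `|a|.
  apply: le_trans (ltW a1) _; rewrite ler_peMl ?ltW // ltr1n //.
have bh : forall i, (i < n)%N -> `|zh`_i| < 2%:R * `|a|.
  move=> i Hi.
  apply: (root_bound (q := c n.-1 * zh`_i ^+ n.-1) (K := K) n2 (ltW a1) (ltW hK)).
    by have := is_roots_root Hh (i := i); rewrite szh h_eval => ->.
  move=> _; rewrite normrM normrX; apply: ler_wpM2r => //; exact: exprn_ge0.
have bf : forall i, (i < n)%N -> `|zf`_i| < 2%:R * `|a|.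
  move=> i Hi.
  apply: (root_bound (q := \sum_(1 <= i0 < n) c i0 * zf`_i ^+ i0) (K := K) n2 (ltW a1) (ltW hK)).
    by have := is_roots_root Hf (i := i); rewrite szf f_eval2 => ->.
  move=> w1; apply: le_trans (Pbound _ _ (lexx _) w1) _.
  apply: ler_wpM2r; first exact: exprn_ge0.
  exact: subsum.
have key1 : K * (2%:R * `|a|) ^+ n.-1 < dl * `|a| * (dl *+ 2 * `|a|) ^+ n.-1.
  have := key K0 Q10 A0 hM1; rewrite /Q1 exprS exprMn.
  by move=> H; rewrite [in X in _ < X]exprMn [in X in _ < X]mulrACA.
have H1le : dl * `|a| <= dl *+ 2 * `|a|.
  by apply: ler_wpM2r; [exact: ltW | rewrite mulr2n lerDl ltW].
have aa : `|a| <= 2%:R * `|a| by rewrite ler_peMl ?ltW // ltr1n.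
have [sg1 Hsg1] : exists sigma : 'S_n, forall k : 'I_n,
    `|a * rho`_k - zh`_(sigma k)| < dl * `|a|.
  apply: (matching2 (R := fun i : 'I_n => a * rho`_i) (S := fun j : 'I_n => zh`_j)).
  - by rewrite mulr_gt0.
  - exact: H1le.
  - move=> i j ij; rewrite -mulrnAl -mulrnA /= dl4 -mulrBr normrM mulrC.
    by apply: ler_wpM2l; [exact: ltW | exact: sepr].
  - move=> j /=.
    rewrite -normr_prod -(scaled_roots (zh`_j) a0 evr).
    have : zh`_j ^+ n + c n.-1 * zh`_j ^+ n.-1 + a ^+ n = 0.
      by have := is_roots_root Hh (i := j); rewrite szh h_eval => ->.
    rewrite addrAC => /eqP; rewrite addr_eq0 => /eqP ->; rewrite normrN.
    apply: le_lt_trans key1; rewrite normrM normrX; apply: ler_pM => //.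
      exact: exprn_ge0.
    apply: lerXn2r; rewrite ?nnegrE ?mulr_ge0 ?ler0n //; apply: ltW; apply: bh; exact: ltn_ord.
  - move=> i /=.
    have := is_roots_eval (a * rho`_i) Hh; rewrite szh => <-.
    rewrite h_eval exprMn rhoN mulrN1 addrAC addNr add0r.
    have hb : `|c n.-1 * (a * rho`_i) ^+ n.-1| <= K * (2%:R * `|a|) ^+ n.-1.
      rewrite normrM normrX normrM nr // mulr1; apply: ler_pM => //.
      rewrite exprn_ge0 //=.
      by apply: lerXn2r; rewrite ?nnegrE ?mulr_ge0 ?ler0n // ltW.
    apply: le_lt_trans hb _; apply: lt_le_trans key1 _.
    rewrite -{2}(prednK n0) exprS; apply: ler_wpM2r => //.
    by rewrite exprn_ge0 // mulr_ge0 // ?mulrn_wge0 // ltW.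
have sep2 : forall i j : 'I_n, i != j -> (dl * `|a|) *+ 2 <= `|zh`_i - zh`_j|.
  move=> i j ij.
  have Hk := Hsg1 ((sg1^-1)%g i); have Hl := Hsg1 ((sg1^-1)%g j).
  rewrite permKV in Hk; rewrite permKV in Hl.
  have kl : (sg1^-1)%g i != (sg1^-1)%g j by rewrite (inj_eq perm_inj).
  have Hd : (dl * `|a|) *+ 4 <= `|a * rho`_((sg1^-1)%g i) - a * rho`_((sg1^-1)%g j)|.
    rewrite -mulrnAl dl4 -mulrBr normrM mulrC.
    by apply: ler_wpM2l; [exact: ltW | exact: sepr].
  have tri := ler_distD (zh`_i) (a * rho`_((sg1^-1)%g i)) (a * rho`_((sg1^-1)%g j)).
  have tri2 := ler_distD (zh`_j) (zh`_i) (a * rho`_((sg1^-1)%g j)).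
  have H : (dl * `|a|) *+ 4 < dl * `|a| + `|zh`_i - zh`_j| + dl * `|a|.
    apply: le_lt_trans Hd _; apply: le_lt_trans tri _.
    rewrite -addrA; apply: ltr_leD => //; apply: le_trans tri2 _.
    by rewrite lerD2l distrC ltW.
  apply: ltW; move: H.
  by rewrite addrAC -mulr2n addrC (_ : 4%N = 2 + 2)%N // mulrnDr ltrD2r.
have key2 : K * (2%:R * `|a|) ^+ n.-2 < eps * (dl * `|a|) ^+ n.-1.
  have := key K0 Q20 A0 hM3; rewrite n1 /Q2 exprMn mulrA; by rewrite [in X in _ -> _ < X]exprMn mulrA.
have epsH : eps <= dl * `|a|.
  by apply: ltW; move: hM2; rewrite /M2 ltr_pdivrMr // mulrC.
have Pb : forall z, `|z| <= 2%:R * `|a| ->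
    `|\sum_(1 <= i < n.-1) c i * z ^+ i| <= K * (2%:R * `|a|) ^+ n.-2.
  move=> z zB; apply: le_trans (Pbound _ _ zB twoA1) _.
  apply: ler_wpM2r; first by rewrite exprn_ge0 // ltW // (lt_le_trans _ twoA1) ?ltr01.
  by apply: subsum; exact: leq_pred.
have [sg2 Hsg2] : exists sigma : 'S_n, forall k : 'I_n,
    `|zh`_k - zf`_(sigma k)| < eps.
  apply: (matching2 (R := fun i : 'I_n => zh`_i) (S := fun j : 'I_n => zf`_j) (H := dl * `|a|)) => //.
  - move=> j0 /=.
    have := is_roots_eval (zf`_j0) Hh; rewrite szh => <-.
    have : (f_poly n c a).[zf`_j0] = 0.
      by have := is_roots_root Hf (i := j0); rewrite szf => ->.
    rewrite f_eval // => /eqP; rewrite addr_eq0 => /eqP ->; rewrite normrN.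
    apply: le_lt_trans key2; apply: Pb; apply: ltW; apply: bf; exact: ltn_ord.
  - move=> i0 /=.
    have := is_roots_eval (zh`_i0) Hf; rewrite szf => <-.
    have : (h_poly n c a).[zh`_i0] = 0.
      by have := is_roots_root Hh (i := i0); rewrite szh => ->.
    rewrite f_eval // => ->; rewrite add0r.
    apply: le_lt_trans (Pb _ _) _; first by apply: ltW; apply: bh; exact: ltn_ord.
    apply: lt_le_trans key2 _.
    rewrite -{2}(prednK n0) exprS; apply: ler_wpM2r => //.
    by rewrite exprn_ge0 // mulr_ge0 // ltW.
move: sg2 Hsg2; rewrite -szh => sg2 Hsg2.
apply: le_lt_trans (dF_le zf sg2) _.
exact: dF_perm_lt.
Qed.
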